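(* Consider $n$ processes running the Median-based Byzantine Agreement algorithm (described in the context) with parameter $\alpha$, where $\alpha < \lceil n/6 \rceil - 1$, in a system with fewer than $\lfloor n/3 \rfloor$ Byzantine processes and fewer than $\alpha$ processes subject to malicious transient faults. Then (consistency) all non-faulty processes output the same value $d$, and (interval validity) $d \in \{\min T,\dots,\max T\}$, where $T$ is the multiset of inputs of the non-faulty processes.
   Context: System model: $n$ processes $p_1,\dots,p_n$ communicate over a complete network in fully synchronous rounds (every message sent in a round is delivered before the next round); the receiver of a message knows its sender. A Byzantine process may deviate arbitrarily from the protocol, e.g. send different messages to different processes or omit messages. A malicious transient fault at a non-Byzantine process replaces its value (input) by an arbitrary, possibly adversarially chosen value (possibly $\bot$) at the start of the execution; afterwards the process follows the algorithm (so it sends the same value to everyone). A process is non-faulty if it is neither Byzantine nor subject to a transient fault. Each process $p_i$ has an input value $v_i$ from a totally ordered domain $V$ (integers); $\bot\notin V$ is a special default value. WeakMVBA: a Byzantine agreement protocol (tolerating the given number of Byzantine processes) in which each process has an input and all non-faulty processes terminate with: (consistency) the same decision value; (weak validity) if all non-faulty processes have the same input $v$, the decision is $v$; otherwise the decision is some value of $V\cup\{\bot\}$. Median-based Byzantine Agreement algorithm with parameter $\alpha \ge 0$, run by a process with input $v$: (1) send $v$ to all processes (including itself); initialize an array $A[1..n]$ to $\bot$ and set $A[i]$ to the value received from $p_i$. (2) For each $i=1,\dots,n$, in parallel, run an instance of WeakMVBA in which this process uses input $A[i]$, and replace $A[i]$ by the decision of that instance. (3) Output select\_value$(A)$, defined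 as: delete all $\bot$ entries of $A$ to obtain a list $A_{\not\bot}$ of length $k$; let $C[u]$ be the number of occurrences of $u$ in $A_{\not\bot}$ and let $m$ be a value maximizing $C[m]$ (ties broken by a fixed deterministic rule); if $C[m] \ge \lfloor k/3\rfloor + 1 + \alpha$, output $m$; otherwise sort $A_{\not\bot}$ in nondecreasing order and output its median element (the entry at position $\lfloor k/2 \rfloor$; for even $k$ the lower of the two middle values). *)

(* Defs.v *)
From mathcomp Require Import all_boot all_order all_algebra.
Set Implicit Arguments. Unset Strict Implicit. Unset Printing Implicit Defensive.
Import Order.TTheory GRing.Theory Num.Theory.
Local Open Scope ring_scope.

(* Values are integers; [None] plays the role of the default value \bot. *)

Definition mode_rule (pick : seq int -> int) : Prop :=
  forall L : seq int, L != [::] ->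
    pick L \in L /\ forall u : int, (count_mem u L <= count_mem (pick L) L)%N.

Definition select_value (pick : seq int -> int) (alpha : nat)
    (A : seq (option int)) : option int :=
  let L := pmap id A in
  let k := size L in
  if k == 0%N then None else
  let m := pick L in
  if (k %/ 3 + 1 + alpha <= count_mem m L)%N then Some m
  else Some (nth 0 (sort (fun x y : int => x <= y) L) (k.-1)./2).
  (* lower median: 0-based index floor((k-1)/2) of the sorted list *)

(* Main.v *)
Require Import Defs.
From mathcomp Require Import all_boot all_order all_algebra.
From mathcomp Require Import zify.
Import Order.TTheory GRing.Theory Num.Theory.
Local Open Scope ring_scope.

Lemma count_enum_card (T : finType) (a : pred T) : (count a (enum T) = #|a|)%N.
Proof. by rewrite cardE -size_filter /enum_mem filter_predT. Qed.

Definition oP (P : pred int) (o : option int) : bool :=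
  if o is Some x then P x else false.

Lemma count_pmap (P : pred int) (s : seq (option int)) :
  count P (pmap id s) = count (oP P) s.
Proof. by elim: s => [|[x|] s IH] //=; rewrite IH. Qed.

Lemma count_split (T : Type) (a b : pred T) (s : seq T) :
  count a s = (count (fun x => b x && a x) s + count (fun x => ~~ b x && a x) s)%N.
Proof.
elim: s => [|x s IH] //=; rewrite IH; case: (b x); case: (a x) => /=; lia.
Qed.

Lemma sorted_count_le (s : seq int) (t : nat) :
  sorted (fun x y : int => x <= y) s -> (t < size s)%N ->
  (t.+1 <= count (fun x : int => (x <= nth 0 s t)%R) s)%N.
Proof.
move=> ss ts.
set P := (fun x : int => _).
have -> : count P s = (count P (take t.+1 s) + count P (drop t.+1 s))%N by rewrite -count_cat cat_take_drop.
have : all P (take t.+1 s).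
  apply/(all_nthP 0) => i.
  rewrite (size_takel ts) => hi; rewrite /P nth_take //...
  apply: (sorted_leq_nth le_trans lexx) => //; rewrite inE /=; lia.
move=> hall; move: (hall); rewrite (all_count P) => /eqP ->.
rewrite (size_takel ts); lia.
Qed.

Lemma sorted_count_ge (s : seq int) (t : nat) :
  sorted (fun x y : int => x <= y) s -> (t < size s)%N ->
  (size s - t <= count (fun x : int => (nth 0 s t <= x)%R) s)%N.
Proof.
move=> ss ts.
set P := (fun x : int => _).
have -> : count P s = (count P (take t s) + count P (drop t s))%N by rewrite -count_cat cat_take_drop.
have : all P (drop t s).
  apply/(all_nthP 0) => i.
  rewrite size_drop => hi; rewrite /P nth_drop //.
  apply: (sorted_leq_nth le_trans lexx) => //; [rewrite inE /=; by rewrite -ltn_subRL | by rewrite leq_addr].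
move=> hall; move: (hall); rewrite (all_count P) => /eqP ->.
rewrite size_drop; lia.
Qed.

Section Arith.
Set Implicit Arguments.
Variables (n alpha b f g bd cc : nat).
Hypotheses (hB : (b < n %/ 3)%N) (hF : (f < alpha)%N)
  (ha : (alpha < (n + 5) %/ 6 - 1)%N) (hg : (g + bd = n)%N)
  (hbd : (bd <= b + f)%N) (hcc : (cc <= bd)%N).

Lemma ar_k0 : (g + cc == 0)%N = false.
Proof. apply/negbTE; lia. Qed.

Lemma ar_mode x3 : (x3 <= cc)%N -> ((g + cc) %/ 3 + 1 + alpha <= 0 + x3)%N -> False.
Proof. lia. Qed.

Lemma ar_med1 x2 : (x2 <= cc)%N -> (((g + cc).-1)./2.+1 <= 0 + x2)%N -> False.
Proof. rewrite -divn2; lia. Qed.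

Lemma ar_med2 x2 : (x2 <= cc)%N -> ((g + cc) - ((g + cc).-1)./2 <= 0 + x2)%N -> False.
Proof. rewrite -divn2; lia. Qed.
End Arith.
Arguments ar_k0 {n alpha b f g bd cc}.
Arguments ar_mode {n alpha b f g bd cc} _ _ _ _ _ _ {x3}.
Arguments ar_med1 {n alpha b f g bd cc} _ _ _ _ _ _ {x2}.
Arguments ar_med2 {n alpha b f g bd cc} _ _ _ _ _ _ {x2}.

Lemma ar_t k : (k == 0)%N = false -> (k.-1./2 < k)%N.
Proof. move/negbT; rewrite -divn2; lia. Qed.

Lemma count_or_le (T : Type) (a b c : pred T) (s : seq T) :
  (forall x, c x -> a x || b x) -> (count c s <= count a s + count b s)%N.
Proof.
move=> H; elim: s => [|x s IH] //=.
have := H x; case: (c x); case: (a x); case: (b x) => //= Hx; try lia; by have := Hx isT.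
Qed.

Theorem theorem2
  (n alpha : nat) (B F : {set 'I_n})
  (hBF : [disjoint B & F])
  (hB : (#|B| < n %/ 3)%N)
  (hF : (#|F| < alpha)%N)
  (halpha : (alpha < (n + 5) %/ 6 - 1)%N)
  (pick : seq int -> int) (hpick : mode_rule pick)
  (v : 'I_n -> int) (w : 'I_n -> option int)
  (recv : 'I_n -> 'I_n -> option int)
  (dec : 'I_n -> 'I_n -> option int) :
  let nonfaulty (p : 'I_n) := (p \notin B) && (p \notin F) in
  let sent (j : 'I_n) := if j \in F then w j else Some (v j) in
  let A0 (p j : 'I_n) := if j \in B then recv p j else sent j in
  (* WeakMVBA consistency for every instance j *)
  (forall j p q, nonfaulty p -> nonfaulty q -> dec p j = dec q j) ->
  (* WeakMVBA weak validity for every instance j *)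
  (forall j (x : int), (forall p, nonfaulty p -> A0 p j = Some x) ->
     forall p, nonfaulty p -> dec p j = Some x) ->
  let out (p : 'I_n) := select_value pick alpha [seq dec p j | j <- enum 'I_n] in
  exists d : int,
    (forall p, nonfaulty p -> out p = Some d) /\
    (exists2 i, nonfaulty i & v i <= d) /\
    (exists2 i, nonfaulty i & d <= v i).
Proof.
move=> nf sent A0 hcons hval out.
have hgood : forall j, nf j -> forall p, nf p -> dec p j = Some (v j).
  move=> j hj; apply: hval => p _; rewrite /A0 /sent.
  by move/andP: hj => [hjB hjF]; rewrite (negbTE hjB) (negbTE hjF).
set E := enum 'I_n.
have hcnt : (count nf E + count (predC nf) E = n)%N.
  by rewrite count_predC size_enum_ord.
have hbad : (count (predC nf) E <= #|B| + #|F|)%N.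
  have -> : #|B| = count (fun j => j \in B) E by rewrite count_enum_card.
  have -> : #|F| = count (fun j => j \in F) E by rewrite count_enum_card.
  apply: count_or_le => j /=; rewrite /nf negb_and !negbK; by [].
have : (0 < count nf E)%N by lia.
rewrite -has_count => /hasP [p0 _ hp0].
suff [d [hd1 hd2]] : exists d, out p0 = Some d /\
    (exists2 i, nf i & v i <= d) /\ (exists2 i, nf i & d <= v i).
  exists d; split => // p hp; rewrite -hd1 /out; congr select_value.
  by apply: eq_map => j; apply: hcons.
set c := count (fun j => ~~ nf j && oP predT (dec p0 j)) E.
have hc : (c <= count (predC nf) E)%N.
  by apply: sub_count => j /andP [].
set L := pmap id [seq dec p0 j | j <- E].
have hsplit : forall P : pred int, count P L =
   (count (fun j => nf j && P (v j)) E + count (fun j => ~~ nf j && oP P (dec p0 j)) E)%N.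
  move=> P; rewrite count_pmap count_map (count_split _ _ nf).
  congr addn; apply: eq_count => j /=.
  by case hj: (nf j) => //=; rewrite (hgood j hj p0 hp0).
have hbadP : forall P : pred int,
   (count (fun j => ~~ nf j && oP P (dec p0 j)) E <= c)%N.
  move=> P; apply: sub_count => j /andP [-> ] /=; by case: (dec p0 j).
have hk : size L = (count nf E + c)%N.
  rewrite -(count_predT L) hsplit; congr addn; apply: eq_count => j /=.
  by rewrite andbT.
rewrite /out /select_value -/E -/L /=.

have hk0 : (size L == 0%N) = false.
  rewrite hk. exact: (ar_k0 hB hF halpha hcnt hbad hc).
rewrite hk0.
case: ifP => hm.
  set m := pick L.
  have hm2 := hsplit (pred1 m).
  have hb2 := hbadP (pred1 m).
  case: (posnP (count (fun j => nf j && pred1 m (v j)) E)) => hpos.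
    exfalso; rewrite hm2 hpos hk in hm.
    exact: (ar_mode hB hF halpha hcnt hbad hc hb2 hm).
  move: hpos; rewrite -has_count => /hasP [i _ /andP [hi /eqP hvi]].
  exists m; split => //; split; exists i => //; by rewrite hvi.
set s := sort _ L.
set t := (size L).-1./2.
have ss : sorted (fun x y : int => x <= y) s by apply: sort_sorted; exact: le_total.
have hps : perm_eq s L by rewrite /s perm_sort.
have hsz : size s = size L by apply: perm_size.
have ht : (t < size s)%N by rewrite hsz /t; apply: ar_t.
have ht' : t = (count nf E + c).-1./2 by rewrite /t hk.
exists (nth 0 s t); split => //; split.
  have hle := @sorted_count_le s t ss ht.
  rewrite ((permP hps) _) hsplit in hle.
  have hb2 := hbadP (fun x : int => (x <= nth 0 s t)%R).
  case: (posnP (count (fun j => nf j && (v j <= nth 0 s t)%R) E)) => hpos.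
    exfalso; rewrite hpos {1}ht' in hle.
    exact: (ar_med1 hB hF halpha hcnt hbad hc hb2 hle).
  move: hpos; rewrite -has_count => /hasP [i _ /andP [hi hvi]].
  by exists i.
have hle := @sorted_count_ge s t ss ht.
rewrite ((permP hps) _) hsplit hsz in hle.
have hb2 := hbadP (fun x : int => (nth 0 s t <= x)%R).
case: (posnP (count (fun j => nf j && (nth 0 s t <= v j)%R) E)) => hpos.
  exfalso; rewrite hpos hk {1}ht' in hle.
  exact: (ar_med2 hB hF halpha hcnt hbad hc hb2 hle).
move: hpos; rewrite -has_count => /hasP [i _ /andP [hi hvi]].
by exists i.
Qed.
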